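(* Let $!\Gamma$ be a nonempty finite multiset of ILL formulae each of the form $!\gamma$, $\psi$ an ILL formula, $\mathcal{B}$ a base and $L,K$ atomic multisets. If $\Vdash^L_{\mathcal{B}}!\Gamma$ and $!\Gamma\Vdash^K_{\mathcal{B}}\psi$, then $\Vdash^{L,K}_{\mathcal{B}}\psi$.
   Context: Fix a set $\mathbb{A}$ of propositional atoms. ILL formulae: $\phi ::= p\in\mathbb{A} \mid \top \mid 0 \mid 1 \mid \phi\multimap\phi \mid \phi\otimes\phi \mid \phi\,\&\,\phi \mid \phi\oplus\phi \mid\ !\phi$. All multisets are finite; ''$\Gamma,\Delta$'' denotes multiset union. Atomic rules and bases: an atomic sequent is $P\Rightarrow p$ with $P$ a multiset of atoms, $p$ an atom. An atomic box is a multiset of atomic sequents. An atomic rule is a triple $\langle\mathbf{A},\mathbf{S},p\rangle$ with $\mathbf{A}$ a multiset of atomic boxes, $\mathbf{S}$ an atomic box, $p$ an atom. A base is a set of atomic rules. An atom $p$ is persistent in $\mathcal{B}$ if some $\langle\varnothing,\mathbf{S},p\rangle\in\mathcal{B}$ has $\mathbf{S}\neq\varnothing$. Derivability $\vdash_{\mathcal{B}}$: (Ref) $p\vdash_{\mathcal{B}}p$; (App) if $\langle\mathbf{A},\mathbf{S},p\rangle\in\mathcal{B}$ with $\mathbf{A}=\{\mathbf{T}_1,\dots,\mathbf{T}_m\}$, and there are atomic multisets $C_1,\dots,C_n$ ($n\ge m$) and a multiset $D=\{d_{m+1},\dots,d_n\}$ of atoms persistent in $\mathcal{B}$ such that $C_i,Q\vdash_{\mathcal{B}}q$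 for every $i\le m$ and every $Q\Rightarrow q\in\mathbf{T}_i$, $C_j\vdash_{\mathcal{B}}d_j$ for every $m<j\le n$, and $D,U\vdash_{\mathcal{B}}v$ for every $U\Rightarrow v\in\mathbf{S}$, then $C_1,\dots,C_n\vdash_{\mathcal{B}}p$. Support $\Vdash^L_{\mathcal{B}}$ (base $\mathcal{B}$, atomic multiset $L$), by induction on formulae: $\Vdash^L_{\mathcal{B}}p$ iff $L\vdash_{\mathcal{B}}p$; $\Vdash^L_{\mathcal{B}}\varphi\multimap\psi$ iff $\varphi\Vdash^L_{\mathcal{B}}\psi$; $\Vdash^L_{\mathcal{B}}\varphi\otimes\psi$ iff for all $\mathcal{C}\supseteq\mathcal{B}$, atomic $K$, atoms $p$: if $\varphi,\psi\Vdash^K_{\mathcal{C}}p$ then $\Vdash^{L,K}_{\mathcal{C}}p$; $\Vdash^L_{\mathcal{B}}1$ iff for all $\mathcal{C}\supseteq\mathcal{B}$, $K$, $p$: if $\Vdash^K_{\mathcal{C}}p$ then $\Vdash^{L,K}_{\mathcal{C}}p$; $\Vdash^L_{\mathcal{B}}\varphi\&\psi$ iff $\Vdash^L_{\mathcal{B}}\varphi$ and $\Vdash^L_{\mathcal{B}}\psi$; $\Vdash^L_{\mathcal{B}}\varphi\oplus\psi$ iff for all $\mathcal{C}\supseteq\mathcal{B}$, $K$, $p$: if $\varphi\Vdash^K_{\mathcal{C}}p$ and $\psi\Vdash^K_{\mathcal{C}}p$ then $\Vdash^{L,K}_{\mathcal{C}}p$; $\Vdash^L_{\mathcal{B}}0$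 iff $\Vdash^{L,K}_{\mathcal{B}}p$ for all atoms $p$ and atomic $K$; $\Vdash^L_{\mathcal{B}}\top$ always; $\Vdash^L_{\mathcal{B}}!\varphi$ iff for all $\mathcal{C}\supseteq\mathcal{B}$, $K$, $p$: if (for all $\mathcal{D}\supseteq\mathcal{C}$, $\Vdash^{\varnothing}_{\mathcal{D}}\varphi$ implies $\Vdash^K_{\mathcal{D}}p$) then $\Vdash^{L,K}_{\mathcal{C}}p$. For nonempty multisets: $\Vdash^L_{\mathcal{B}}\Gamma,\Delta$ iff $L=K,M$ with $\Vdash^K_{\mathcal{B}}\Gamma$ and $\Vdash^M_{\mathcal{B}}\Delta$. For a nonempty antecedent written $!\Delta,\Theta$, where $!\Delta$ collects the formulae with top-level connective $!$ (with $\Delta$ the formulae under those $!$) and $\Theta$ contains none: $!\Delta,\Theta\Vdash^L_{\mathcal{B}}\varphi$ iff for all $\mathcal{C}\supseteq\mathcal{B}$ and atomic $K$, if $\Vdash^{\varnothing}_{\mathcal{C}}\delta$ for every $\delta\in\Delta$ and $\Vdash^K_{\mathcal{C}}\Theta$ then $\Vdash^{L,K}_{\mathcal{C}}\varphi$ (when $\Theta$ is empty, $K$ is empty). An empty antecedent: $\varnothing\Vdash^L_{\mathcal{B}}\varphi$ means $\Vdash^L_{\mathcal{B}}\varphi$. *)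

(* Defs.v *)
(* base-extension semantics for ILL (atoms of an arbitrary type A;
   finite multisets represented by lists, multiset equality = Permutation). *)
From Stdlib Require Import List Permutation.
Import ListNotations.
Set Implicit Arguments.

Section ILL.
Variable A : Type.

Definition sequent : Type := (list A * A)%type.
Definition box : Type := list sequent.
Definition rule : Type := (list box * box * A)%type.
Definition base : Type := rule -> Prop.

Definition subbase (B C : base) : Prop := forall r, B r -> C r.

Definition persistent (B : base) (p : A) : Prop :=
  exists S : box, B ([], S, p) /\ S <> [].

(* derivability  L |-_B p.  In (App): Cs = [C_1;..;C_m] are paired with the
   boxes As = [T_1;..;T_m]; CD = [(C_{m+1},d_{m+1});..;(C_n,d_n)]. *)
Inductive deriv (B : base) : list A -> A -> Prop :=
| d_ref (p : A) : deriv B [p] p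
| d_app (As : list box) (S : box) (p : A) (Cs : list (list A))
        (CD : list (list A * A)) (L : list A) :
    B (As, S, p) ->
    length Cs = length As ->
    (forall i, i < length As -> forall Q q, In (Q, q) (nth i As []) ->
        deriv B (nth i Cs [] ++ Q) q) ->
    (forall c d, In (c, d) CD -> persistent B d /\ deriv B c d) ->
    (forall U v, In (U, v) S -> deriv B (map snd CD ++ U) v) ->
    Permutation L (concat Cs ++ concat (map fst CD)) ->
    deriv B L p.

Inductive formula : Type :=
| FAtom (p : A)
| FTop
| FZero
| FOne
| FLolli (f g : formula)
| FTensor (f g : formula)
| FWith (f g : formula)
| FPlus (f g : formula)
| FBang (f : formula).

(* support  ||-^L_B phi.  For an antecedent formula chi, its contribution with
   resource M in base D is: if chi = !delta then M = [] and ||-^[]_D delta,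
   otherwise ||-^M_D chi. *)
Fixpoint supp (B : base) (L : list A) (phi : formula) {struct phi} : Prop :=
  match phi with
  | FAtom p => deriv B L p
  | FTop => True
  | FZero => forall (p : A) (K : list A), deriv B (L ++ K) p
  | FOne => forall C, subbase B C -> forall (K : list A) (p : A),
      deriv C K p -> deriv C (L ++ K) p
  | FLolli f g => forall C, subbase B C -> forall K : list A,
      (match f with
       | FBang d => K = [] /\ supp C [] d
       | _ => supp C K f end) ->
      supp C (L ++ K) g
  | FTensor f g => forall C, subbase B C -> forall (K : list A) (p : A),
      (forall D, subbase C D -> forall M1 M2 : list A,
         (match f with
          | FBang d => M1 = [] /\ supp D [] d
          | _ => supp D M1 f end) ->
         (match g with
          | FBang d => M2 = [] /\ supp D [] d
          | _ => supp D M2 g end) ->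
         deriv D (K ++ (M1 ++ M2)) p) ->
      deriv C (L ++ K) p
  | FWith f g => supp B L f /\ supp B L g
  | FPlus f g => forall C, subbase B C -> forall (K : list A) (p : A),
      (forall D, subbase C D -> forall M : list A,
         (match f with
          | FBang d => M = [] /\ supp D [] d
          | _ => supp D M f end) ->
         deriv D (K ++ M) p) ->
      (forall D, subbase C D -> forall M : list A,
         (match g with
          | FBang d => M = [] /\ supp D [] d
          | _ => supp D M g end) ->
         deriv D (K ++ M) p) ->
      deriv C (L ++ K) p
  | FBang f => forall C, subbase B C -> forall (K : list A) (p : A),
      (forall D, subbase C D -> supp D [] f -> deriv D K p) ->
      deriv C (L ++ K) p
  end.

Fixpoint supp_multi (B : base) (L : list A) (G : list formula) : Prop :=
  match G with
  | [] => L = []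
  | [f] => supp B L f
  | f :: G' => exists K M : list A,
      Permutation L (K ++ M) /\ supp B K f /\ supp_multi B M G'
  end.

Definition ante_hyp (C : base) (M : list A) (chi : formula) : Prop :=
  match chi with
  | FBang d => M = [] /\ supp C [] d
  | _ => supp C M chi
  end.

Definition supp_ante (B : base) (L : list A) (G : list formula) (phi : formula)
  : Prop :=
  match G with
  | [] => supp B L phi
  | _ => forall C, subbase B C -> forall Ms : list (list A),
      Forall2 (ante_hyp C) Ms G -> supp C (L ++ concat Ms) phi
  end.

End ILL.

(* Main.v *)
Require Import Defs.
From Stdlib Require Import List Permutation.
Import ListNotations.

Section Pf.
Variable A : Type.

Lemma sub_refl (B : base A) : subbase B B.
Proof. intros r H; exact H. Qed.

Lemma sub_trans (B C D : base A) : subbase B C -> subbase C D -> subbase B D.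
Proof. intros H1 H2 r H; apply H2, H1, H. Qed.

Lemma deriv_mono (B C : base A) : subbase B C -> forall L p, deriv B L p -> deriv C L p.
Proof.
  intros HBC. fix IH 3. intros L p H; destruct H.
  - apply d_ref.
  - eapply d_app with (As := As) (Cs := Cs) (CD := CD); eauto.
    intros c d Hin. destruct (H2 c d Hin) as [[S0 [HS HS0]] Hd].
    split; [exists S0; split; auto | apply IH; exact Hd].
Qed.

Lemma deriv_perm (B : base A) L L' p : Permutation L L' -> deriv B L p -> deriv B L' p.
Proof.
  intros HP H; destruct H.
  - apply Permutation_length_1_inv in HP; subst; apply d_ref.
  - eapply d_app; eauto. eapply Permutation_trans; [apply Permutation_sym, HP|]; eauto.
Qed.

Lemma supp_mono (f : formula A) : forall (B C : base A) L,
  subbase B C -> supp B L f -> supp C L f.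
Proof.
  induction f; simpl; intros B C L HBC H; auto.
  - eapply deriv_mono; eauto.
  - intros; eapply deriv_mono; eauto.
  - intros; apply H; auto; eapply sub_trans; eauto.
  - intros; apply H; auto; eapply sub_trans; eauto.
  - intros C' HC' K p H'; apply H; auto; eapply sub_trans; eauto.
  - destruct H; split; eauto.
  - intros C' HC' K p H1 H2; apply H; auto; eapply sub_trans; eauto.
  - intros C' HC' K p H1; apply H; auto; eapply sub_trans; eauto.
Qed.

Lemma ante_mono (f : formula A) (B C : base A) M :
  subbase B C -> ante_hyp B M f -> ante_hyp C M f.
Proof.
  intros HBC H; destruct f; try exact (supp_mono _ _ _ _ HBC H).
  destruct H as [H1 H2]; split; [exact H1| exact (supp_mono _ _ _ _ HBC H2)].
Qed.

Lemma supp_perm (f : formula A) : forall (B : base A) L L',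
  Permutation L L' -> supp B L f -> supp B L' f.
Proof.
  induction f; simpl; intros B L L' HP H; auto.
  - eapply deriv_perm; eauto.
  - intros; eapply deriv_perm; [|apply H]; apply Permutation_app_tail; auto.
  - intros; eapply deriv_perm; [|apply H; eauto]; apply Permutation_app_tail; auto.
  - intros C HC K H1. eapply IHf2; [|apply H; eauto]; apply Permutation_app_tail; auto.
  - intros; eapply deriv_perm; [|apply H; eauto]; apply Permutation_app_tail; auto.
  - destruct H; split; eauto.
  - intros; eapply deriv_perm; [|apply H; eauto]; apply Permutation_app_tail; auto.
  - intros; eapply deriv_perm; [|apply H; eauto]; apply Permutation_app_tail; auto.
Qed.

Lemma key (psi g : formula A) : forall (B : base A) L K,
  supp B L (FBang g) ->
  (forall C, subbase B C -> supp C [] g -> supp C K psi) ->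
  supp B (L ++ K) psi.
Proof.
  induction psi; intros B L K Hb Hk; simpl in *.
  - apply Hb; auto. apply sub_refl.
  - auto.
  - intros p K'. rewrite <- app_assoc. apply Hb; [apply sub_refl|].
    intros D HD Hg. apply (Hk D HD Hg).
  - intros C HC K' p Hd. rewrite <- app_assoc. apply Hb; auto.
    intros D HD Hg. apply (Hk D (sub_trans _ _ _ HC HD) Hg); [apply sub_refl|].
    eapply deriv_mono; eauto.
  - intros C HC K' Ha. rewrite <- app_assoc. apply IHpsi2.
    + eapply (supp_mono (FBang g)); eauto.
    + intros D HD Hg. apply (Hk D (sub_trans _ _ _ HC HD) Hg); [apply sub_refl|].
      exact (ante_mono psi1 _ _ _ HD Ha).
  - intros C HC K' p Hd. rewrite <- app_assoc. apply Hb; auto.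
    intros D HD Hg. apply (Hk D (sub_trans _ _ _ HC HD) Hg); [apply sub_refl|].
    intros D' HD'; apply Hd; eapply sub_trans; eauto.
  - split; [apply IHpsi1|apply IHpsi2]; auto; intros C HC Hg; apply (Hk C HC Hg).
  - intros C HC K' p H1 H2. rewrite <- app_assoc. apply Hb; auto.
    intros D HD Hg. apply (Hk D (sub_trans _ _ _ HC HD) Hg); [apply sub_refl| |];
    intros D' HD'; [apply H1|apply H2]; eapply sub_trans; eauto.
  - intros C HC K' p H1. rewrite <- app_assoc. apply Hb; auto.
    intros D HD Hg. apply (Hk D (sub_trans _ _ _ HC HD) Hg); [apply sub_refl|].
    intros D' HD'; apply H1; eapply sub_trans; eauto.
Qed.

Lemma multi_mono (G : list (formula A)) : forall (B C : base A) L,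
  subbase B C -> supp_multi B L G -> supp_multi C L G.
Proof.
  induction G as [|f G IH]; intros B C L HBC H; simpl in *; auto.
  destruct G.
  - eapply supp_mono; eauto.
  - destruct H as [K1 [M [HP [H1 H2]]]]. exists K1, M; split; [|split]; auto.
    + eapply supp_mono; eauto.
    + eapply IH; eauto.
Qed.

Lemma main (psi : formula A) (G : list (formula A)) : G <> [] ->
  forall (B : base A) L K,
  supp_multi B L (map (@FBang A) G) ->
  (forall C, subbase B C -> Forall (fun g => supp C [] g) G -> supp C K psi) ->
  supp B (L ++ K) psi.
Proof.
  induction G as [|g G IH]; intros Hne B L K Hm Hk; [congruence|].
  destruct G as [|g' G'].
  - simpl in Hm. apply (key psi g B L K Hm).
    intros C HC Hg; apply Hk; auto.
  - simpl in Hm. destruct Hm as [L1 [L2 [HP [H1 H2]]]].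
    eapply supp_perm; [apply Permutation_app_tail; apply Permutation_sym, HP|].
    rewrite <- app_assoc. apply (key psi g B L1 (L2 ++ K) H1).
    intros C HC Hg. apply IH; [congruence| |].
    + eapply multi_mono; [exact HC|exact H2].
    + intros D HD HF. apply Hk; [eapply sub_trans; eauto|].
      constructor; auto. eapply supp_mono; eauto.
Qed.

End Pf.

Theorem corollary3 (A : Type) (Gamma : list (formula A)) (psi : formula A)
  (B : base A) (L K : list A) :
  Gamma <> [] ->
  supp_multi B L (map (@FBang A) Gamma) ->
  supp_ante B K (map (@FBang A) Gamma) psi ->
  supp B (L ++ K) psi.
Proof.
  intros Hne Hm Ha. apply (main _ psi Gamma Hne B L K Hm).
  intros C HC HF.
  destruct Gamma as [|g G]; [congruence|].
  unfold supp_ante in Ha.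
  specialize (Ha C HC (map (fun _ => []) (g :: G))).
  rewrite <- (app_nil_r K).
  replace ([] : list A) with (concat (map (fun _ : formula A => ([] : list A)) (g :: G))).
  - apply Ha. clear Ha Hm Hne HC.
    induction HF; simpl; constructor; auto. simpl; split; auto.
  - clear. induction (g :: G); simpl; auto.
Qed.
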